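(* Let $(\Omega,\Sigma,\mu)$ be a finite measure space and let $X(\mu)$ be a Banach rectangular function space. The following are equivalent: (i) $X(\mu)$ has the subsequence property; (ii) the inclusion $X(\mu)\subseteq L^0(\mu)$ is continuous, where $L^0(\mu)$ carries the topology of convergence in measure; (iii) the positive cone $X(\mu)^+=\{f\in X(\mu):f\ge 0\ \mu\text{-a.e.}\}$ is closed in $X(\mu)$.
   Context: $L^0(\mu)$ is the space of equivalence classes (modulo $\mu$-a.e. equality) of real $\Sigma$-measurable functions on $\Omega$. A Banach rectangular function space is a vector subspace $X(\mu)\subseteq L^0(\mu)$ with a complete norm such that for some $C>0$, $\chi_Af\in X(\mu)$ and $\|\chi_Af\|\le C\|f\|$ for all $f\in X(\mu)$, $A\in\Sigma$. The subsequence property: whenever $f_n,f\in X(\mu)$ and $f_n\to f$ in norm, some subsequence converges to $f$ $\mu$-a.e. *)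

(* Defs.v *)
From HB Require Import structures.
From mathcomp Require Import all_boot all_order all_algebra.
From mathcomp Require Import all_classical all_reals all_analysis.
Set Implicit Arguments. Unset Strict Implicit. Unset Printing Implicit Defensive.
Import Order.TTheory GRing.Theory Num.Theory numFieldNormedType.Exports.
Local Open Scope classical_set_scope.
Local Open Scope ring_scope.
Definition lt_ereal (R : realType) (a b : \bar R) : Prop := (a < b)%E.

(* Elements of L^0(mu) are represented by measurable representatives
   T -> R; a function space X(mu) is a set X of such representatives which
   is saturated under mu-a.e. equality, and the norm is given by a functional
   N on representatives that is invariant under a.e. equality.  The quotient
   of X by a.e. equality with the norm induced by N is exactly the Banach
   space X(mu) of the paper. *)

Section Defs.
Context (d : measure_display) (T : measurableType d) (R : realType)
  (mu : {measure set T -> \bar R}).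

Record banach_rect_fun_space (X : set (T -> R)) (N : (T -> R) -> R) : Prop := {
  brfs_meas : forall f, X f -> measurable_fun setT f;
  brfs_ae_sat : forall f g, X f -> measurable_fun setT g ->
    {ae mu, forall x, f x = g x} -> X g;
  brfs_zero : X (fun _ => 0);
  brfs_add : forall f g, X f -> X g -> X (fun x => f x + g x);
  brfs_scale : forall (a : R) f, X f -> X (fun x => a * f x);
  brfs_norm_ae : forall f g, X f -> X g ->
    {ae mu, forall x, f x = g x} -> N f = N g;
  brfs_norm_def : forall f, X f -> (N f = 0 <-> {ae mu, forall x, f x = 0});
  brfs_norm_triangle : forall f g, X f -> X g ->
    N (fun x => f x + g x) <= N f + N g;
  brfs_norm_homog : forall (a : R) f, X f -> N (fun x => a * f x) = `|a| * N f;
  brfs_complete : forall u : nat -> T -> R, (forall n, X (u n)) ->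
    (forall e : R, 0 < e -> exists M : nat, forall m n : nat, (M <= m)%N -> (M <= n)%N ->
        N (fun x => u n x - u m x) < e) ->
    exists2 f, X f & (N (fun x => u n x - f x)) @[n --> \oo] --> 0;
  brfs_rect : exists2 C : R, 0 < C & forall f A, X f -> measurable A ->
    X (fun x => \1_A x * f x) /\ N (fun x => \1_A x * f x) <= C * N f
}.

Definition subsequence_property (X : set (T -> R)) (N : (T -> R) -> R) : Prop :=
  forall (u : nat -> T -> R) (f : T -> R), (forall n, X (u n)) -> X f ->
    (N (fun x => u n x - f x)) @[n --> \oo] --> 0 ->
    exists phi : nat -> nat, (forall n, (phi n < phi n.+1)%N) /\
      {ae mu, forall x, ((fun n => u (phi n) x) : nat -> R) @ \oo --> f x}.

(* (ii) continuity of the inclusion X(mu) -> L^0(mu), L^0(mu) carrying the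
   topology of convergence in measure, whose basic neighbourhoods of f are
   {g : mu [set x | eps < |g x - f x|] < delta}, eps, delta > 0. *)
Definition inclusion_L0_continuous (X : set (T -> R)) (N : (T -> R) -> R) : Prop :=
  forall f, X f -> forall eps delta : R, 0 < eps -> 0 < delta ->
    exists2 eta : R, 0 < eta & forall g, X g -> N (fun x => g x - f x) < eta ->
      lt_ereal (mu [set x | eps < `|g x - f x|]) delta%:E.

Definition pos_cone (X : set (T -> R)) : set (T -> R) :=
  [set f | X f /\ {ae mu, forall x, 0 <= f x}].

Definition pos_cone_closed (X : set (T -> R)) (N : (T -> R) -> R) : Prop :=
  forall g, X g ->
    (forall eta : R, 0 < eta -> exists2 f, pos_cone X f & N (fun x => f x - g x) < eta) ->
    pos_cone X g.

End Defs.

(* Main.v *)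
Require Import Defs.
From HB Require Import structures.
From mathcomp Require Import all_boot all_order all_algebra.
From mathcomp Require Import all_classical all_reals all_analysis.
From mathcomp Require Import lra ring measurable_realfun.
Import Order.TTheory GRing.Theory Num.Theory numFieldNormedType.Exports.
Local Open Scope classical_set_scope.
Local Open Scope ring_scope.
Set Implicit Arguments. Unset Strict Implicit.

Section Basic.
Context (d : measure_display) (T : measurableType d) (R : realType)
  (mu : {finite_measure set T -> \bar R})
  (X : set (T -> R)) (N : (T -> R) -> R) (B : banach_rect_fun_space mu X N).

Lemma X_sub f g : X f -> X g -> X (fun x => f x - g x).
Proof.
move=> Xf Xg; have := brfs_add B Xf (brfs_scale B (-1) Xg).
by congr X; apply: funext => x; rewrite mulN1r.
Qed.

Lemma X_opp f : X f -> X (fun x => - f x).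
Proof.
move=> Xf; have := brfs_scale B (-1) Xf.
by congr X; apply: funext => x; rewrite mulN1r.
Qed.

Lemma N0 : N (fun _ => 0) = 0.
Proof. by apply/(brfs_norm_def B (brfs_zero B)); apply: aeW. Qed.

Lemma N_ge0 f : X f -> 0 <= N f.
Proof.
move=> Xf; have := brfs_norm_triangle B Xf (brfs_scale B (-1) Xf).
rewrite (brfs_norm_homog B) // normrN normr1 mul1r.
have -> : (fun x => f x + -1 * f x) = (fun _ => 0).
  by apply: funext => x; rewrite mulN1r subrr.
rewrite N0 -mulr2n -mulr_natr; lra.
Qed.

Lemma N_opp f : X f -> N (fun x => - f x) = N f.
Proof.
move=> Xf; have := brfs_norm_homog B (-1) Xf; rewrite normrN normr1 mul1r => <-.
by congr N; apply: funext => x; rewrite mulN1r.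
Qed.

Lemma N_subC f g : X f -> X g -> N (fun x => f x - g x) = N (fun x => g x - f x).
Proof.
move=> Xf Xg; rewrite -N_opp; last exact: X_sub.
by congr N; apply: funext => x; rewrite opprB.
Qed.

Lemma N_sub_tri f g h : X f -> X g -> X h ->
  N (fun x => f x - h x) <= N (fun x => f x - g x) + N (fun x => g x - h x).
Proof.
move=> Xf Xg Xh; have := brfs_norm_triangle B (X_sub Xf Xg) (X_sub Xg Xh).
by congr (_ <= _); congr N; apply: funext => x; rewrite addrA subrK.
Qed.

Lemma meas_ge0 (f : T -> R) : measurable_fun setT f -> measurable [set x | 0 <= f x].
Proof.
move=> mf; have := mf measurableT `[0, +oo[%classic (measurable_itv _).
by rewrite setTI; congr measurable; apply/seteqP; split => x /=; rewrite in_itv /= andbT.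
Qed.

Lemma meas_lt (f : T -> R) (a : R) : measurable_fun setT f -> measurable [set x | f x < a].
Proof.
move=> mf; have := mf measurableT `]-oo, a[%classic (measurable_itv _).
by rewrite setTI; congr measurable; apply/seteqP; split => x /=; rewrite in_itv /=.
Qed.

Lemma meas_gt (f : T -> R) (a : R) : measurable_fun setT f -> measurable [set x | a < f x].
Proof.
move=> mf; have := mf measurableT `]a, +oo[%classic (measurable_itv _).
by rewrite setTI; congr measurable; apply/seteqP; split => x /=; rewrite in_itv /= andbT.
Qed.

Lemma X_abs : exists2 K : R, 0 < K & forall f, X f ->
  X (fun x => `|f x|) /\ N (fun x => `|f x|) <= K * N f.
Proof.
have [C C0 HC] := brfs_rect B.
exists (C + C); first by lra.
move=> f Xf.
have mA := meas_ge0 (brfs_meas B Xf).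
have mAc : measurable (~` [set x | 0 <= f x]) by exact: measurableC.
have [X1 N1] := HC f _ Xf mA.
have [X2 N2] := HC f _ Xf mAc.
have E : (fun x => `|f x|) = (fun x => \1_[set x | 0 <= f x] x * f x - \1_(~` [set x | 0 <= f x]) x * f x).
  apply: funext => x; rewrite !indicE in_setC.
  have -> : (x \in [set x | 0 <= f x]) = (0 <= f x) by apply/idP/idP; rewrite inE.
  simpl.
  case: (boolP (0 <= f x)) => h /=; rewrite ?mul1r ?mul0r ?subr0 ?sub0r.
  by rewrite ger0_norm.
  by rewrite ltr0_norm // ltNge.
rewrite E; split; first exact: X_sub.
apply: le_trans (brfs_norm_triangle B X1 (X_opp X2)) _.
rewrite N_opp //; lra.
Qed.

Lemma mabsB (f g : T -> R) : measurable_fun setT f -> measurable_fun setT g ->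
  measurable_fun setT (fun x => `|f x - g x|).
Proof.
move=> mf mg; exact: (measurableT_comp (@normr_measurable R setT) (measurable_funB mf mg)).
Qed.

Lemma small_inv (y : R) : 0 < y -> exists n : nat, (n.+1%:R)^-1 < y.
Proof.
move=> y0; exists (Num.bound (y^-1)).
rewrite invf_plt ?posrE ?invr_gt0 ?ltr0n //.
apply: (lt_le_trans (archi_boundP _)); first by rewrite invr_ge0 ltW.
by rewrite ler_nat.
Qed.

Lemma ii_iii : inclusion_L0_continuous mu X N -> pos_cone_closed mu X N.
Proof.
move=> H g Xg Hcl; split => //.
have key : forall n : nat, {ae mu, forall x, -(n.+1%:R)^-1 <= g x}.
  move=> n; set e : R := (n.+1%:R)^-1.
  have e0 : 0 < e by rewrite /e invr_gt0 ltr0n.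
  exists [set x | g x < -e]; split.
  - exact: meas_lt (brfs_meas B Xg).
  - apply/eqP; rewrite -measure_le0; apply/lee_addgt0Pr => delta delta0.
    rewrite add0e.
    have [eta eta0 Heta] := H g Xg e delta e0 delta0.
    have [f [Xf aef] Nf] := Hcl eta eta0.
    have := Heta f Xf Nf; rewrite /lt_ereal => Hlt.
    have [Z [mZ muZ subZ]] := aef.
    have mE : measurable [set x | e < `|f x - g x|].
      exact: (meas_gt (f := fun x => `|f x - g x|)) (mabsB (brfs_meas B Xf) (brfs_meas B Xg)).
    have h1 : (mu [set x | (g x < -e)%R] <= mu (Z `|` [set x | (e < `|f x - g x|)%R]))%E.
      apply: le_measure; rewrite ?inE //; first exact: meas_lt (brfs_meas B Xg).
        exact: measurableU.
      move=> x /= gx; case: (boolP (0 <= f x)) => fx; [right | left].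
        rewrite ger0_norm; lra.
      by apply: subZ => /=; apply/negP.
    have h2 : (mu (Z `|` [set x | (e < `|f x - g x|)%R]) <= mu Z + mu [set x | (e < `|f x - g x|)%R])%E.
      exact: measureU2.
    rewrite muZ add0e in h2.
    rewrite /Defs.lt_ereal in Hlt.
    apply: le_trans (ltW Hlt); exact: le_trans h1 h2.
  - by move=> x /= /negP; rewrite -ltNge.
apply: filterS (ae_foralln key) => x Hx.
rewrite leNgt; apply/negP => gx.
have [n Hn] : exists n : nat, (n.+1%:R)^-1 < - g x by apply: small_inv; rewrite oppr_gt0.
by have Hxn := Hx n; move: Hxn; rewrite lerNl leNgt Hn.
Qed.

Lemma i_ii : subsequence_property mu X N -> inclusion_L0_continuous mu X N.
Proof.
move=> H f Xf eps delta eps0 delta0.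
apply: contrapT => Hn.
have Hg : forall n : nat, exists g, [/\ X g, N (fun x => g x - f x) < (n.+1%:R)^-1 &
    (delta%:E <= mu [set x | (eps < `|g x - f x|)%R])%E].
  move=> n; apply: contrapT => hn; apply: Hn; exists (n.+1%:R^-1).
    by rewrite invr_gt0 ltr0n.
  move=> g Xg Ng; rewrite /Defs.lt_ereal ltNge; apply/negP => hle; apply: hn.
  by exists g; split.
have [gs Hgs] := choice Hg.
have Xgs : forall n, X (gs n) by move=> n; have [] := Hgs n.
have cv : (N (fun x => gs n x - f x)) @[n --> \oo] --> 0.
  apply/cvgrPdist_lt => e e0.
  have [m Hm] := small_inv e0.
  exists m => // n /= hn.
  have [_ Nn _] := Hgs n.
  rewrite sub0r normrN ger0_norm; last exact: N_ge0 (X_sub (Xgs n) Xf).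
  apply: lt_trans Nn _; apply: le_lt_trans Hm.
  by rewrite lef_pV2 ?posrE ?ltr0n // ler_nat.
have [phi [phiinc ae]] := H gs f Xgs Xf cv.
pose A n := [set x | (eps < `|gs (phi n) x - f x|)%R].
have mA : forall n, measurable (A n).
  move=> n; exact: (meas_gt (f := fun x => `|gs (phi n) x - f x|)) (mabsB (brfs_meas B (Xgs _)) (brfs_meas B Xf)).
have muA : forall n, (delta%:E <= mu (A n))%E by move=> n; have [] := Hgs (phi n).
pose Bn k := \bigcup_(j in [set j | (k <= j)%N]) A j.
have mB : forall k, measurable (Bn k) by move=> k; apply: bigcup_measurable => j _.
have noninc : nonincreasing_seq Bn.
  move=> k k' hkk'; apply/subsetPset => x [j /= hj Aj]; exists j => //.
  exact: leq_trans hkk' hj.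
have fin0 : (mu (Bn 0%N) < +oo)%E.
  by rewrite ltey_eq fin_num_measure.
have hc := nonincreasing_cvg_mu fin0 mB (bigcapT_measurable mB) noninc.
have low : (delta%:E <= mu (\bigcap_k Bn k))%E.
  apply: (cvge_to_ge hc).
  apply: nearW => k /=; apply: le_trans (muA k) _; apply: le_measure; rewrite ?inE //.
  by move=> x Ax; exists k => /=.
have [Z [mZ muZ subZ]] := ae.
have sub : \bigcap_k Bn k `<=` Z.
  move=> x Hx; apply: subZ => /= hconv.
  move/cvgrPdist_lt: hconv => /(_ eps eps0) [M _ HM].
  have [j /= hj Aj] := Hx M I.
  have := HM j hj; rewrite distrC => h.
  by move: Aj; rewrite /A /= ltNge (ltW h).
have : (mu (\bigcap_k Bn k) <= mu Z)%E.
  apply: le_measure; rewrite ?inE //; exact: bigcapT_measurable.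
rewrite muZ => h0; have := le_trans low h0; rewrite lee_fin; lra.
Qed.

Lemma iii_i : pos_cone_closed mu X N -> subsequence_property mu X N.
Proof.
move=> H u f Xu Xf cv.
have [K K0 HK] := X_abs.
pose e (k : nat) : R := (2^-1) ^+ k.
have e0 : forall k, 0 < e k by move=> k; rewrite /e exprn_gt0 // invr_gt0.
have eS : forall k, e k.+1 = 2^-1 * e k by move=> k; rewrite /e exprS.
have emon : forall m n, (m <= n)%N -> e n <= e m.
  move=> m n hmn; apply: ler_wiXn2l => //; rewrite ?invr_ge0 ?invf_le1 //; lra.
have HM : forall k, exists M : nat, forall n, (M <= n)%N -> N (fun x => u n x - f x) < e k.
  move=> k; move/cvgrPdist_lt: cv => /(_ _ (e0 k)) [M _ HM]; exists M => n hn.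
  have := HM n hn; rewrite sub0r normrN ger0_norm //; exact: N_ge0 (X_sub (Xu n) Xf).
have [Mk HMk] := choice HM.
pose phi := fix phi (k : nat) : nat := match k with 0 => Mk 0 | k'.+1 => maxn (phi k').+1 (Mk k'.+1) end.
have phiinc : forall k, (phi k < phi k.+1)%N by move=> k; rewrite /= leq_maxl.
have phiM : forall k, (Mk k <= phi k)%N by case=> [|k] //=; rewrite leq_maxr.
exists phi; split => //.
pose h k x := `|u (phi k) x - f x|.
have Xh : forall k, X (h k) by move=> k; have [] := HK _ (X_sub (Xu (phi k)) Xf).
have Nh : forall k, N (h k) <= K * e k.
  move=> k; have [_ h1] := HK _ (X_sub (Xu (phi k)) Xf).
  apply: le_trans h1 _; rewrite ler_pM2l //; apply: ltW; exact: HMk.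
have h0 : forall k x, 0 <= h k x by move=> k x; exact: normr_ge0.
pose S m x := \sum_(0 <= k < m) h k x.
have SS : forall m, S m.+1 = (fun x => S m x + h m x).
  by move=> m; apply: funext => x; rewrite /S big_nat_recr.
have S0 : S 0%N = (fun _ => 0) by apply: funext => x; rewrite /S big_geq.
have XS : forall m, X (S m).
  elim=> [|m IH]; first by rewrite S0; exact: (brfs_zero B).
  by rewrite SS; exact: (brfs_add B IH (Xh m)).
have Smon : forall m j x, S m x <= S (m + j)%N x.
  move=> m; elim=> [|j IH] x; first by rewrite addn0.
  by rewrite addnS SS; apply: le_trans (IH x) _; rewrite lerDl.
have Sbd : forall m j, N (fun x => S (m + j)%N x - S m x) <= K * (2 * e m - 2 * e (m + j)%N).
  move=> m; elim=> [|j IH].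
    have -> : (fun x => S (m + 0)%N x - S m x) = (fun _ => 0).
      by apply: funext => x; rewrite addn0 subrr.
    by rewrite N0 addn0 subrr mulr0.
  have -> : (fun x => S (m + j.+1)%N x - S m x) = (fun x => (S (m + j)%N x - S m x) + h (m + j)%N x).
    by apply: funext => x; rewrite addnS SS addrAC.
  apply: le_trans (brfs_norm_triangle B (X_sub (XS _) (XS _)) (Xh _)) _.
  have := Nh (m + j)%N; rewrite addnS eS => H2.
  have := e0 (m + j)%N => H3.
  nra.
have Sbd2 : forall m n, (m <= n)%N -> N (fun x => S n x - S m x) <= 2 * K * e m.
  move=> m n hmn; rewrite -(subnKC hmn).
  apply: le_trans (Sbd m (n - m)%N) _.
  have := e0 (m + (n - m))%N; nra.
have Cauchy : forall eps : R, 0 < eps -> exists M : nat, forall m n : nat, (M <= m)%N -> (M <= n)%N ->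
    N (fun x => S n x - S m x) < eps.
  move=> eps eps0.
  have ecv : e @ \oo --> 0 by apply: cvg_expr; rewrite ger0_norm ?invr_ge0 ?invf_lt1 //; lra.
  have eps1 : 0 < eps / (2 * K + 1) by apply: divr_gt0 => //; lra.
  move/cvgrPdist_lt: ecv => /(_ _ eps1) [M _ HM0].
  have HM1 : 2 * K * e M < eps.
    have := HM0 M (leqnn M); rewrite sub0r normrN ger0_norm; last exact: ltW.
    rewrite ltr_pdivlMr; last lra.
    have := e0 M; nra.
  exists M => m n hm hn.
  case: (leqP m n) => hmn.
    apply: le_lt_trans (Sbd2 _ _ hmn) _; apply: le_lt_trans HM1.
    by rewrite ler_pM2l ?emon //; lra.
  rewrite N_subC ?XS //.
  apply: le_lt_trans (Sbd2 _ _ (ltnW hmn)) _; apply: le_lt_trans HM1.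
  by rewrite ler_pM2l ?emon //; lra.
have [Sinf XSinf cvS] := brfs_complete B XS Cauchy.
have pc : forall m, {ae mu, forall x, 0 <= Sinf x - S m x}.
  move=> m.
  have [] := H (fun x => Sinf x - S m x) (X_sub XSinf (XS m)); last by [].
  move=> eta eta0.
  move/cvgrPdist_lt: cvS => /(_ _ eta0) [M0 _ HM0].
  exists (fun x => S (maxn m M0) x - S m x).
    split; first exact: X_sub.
    apply: aeW => x.
    rewrite subr_ge0 -(subnKC (leq_maxl m M0)); exact: Smon.
  have -> : (fun x => S (maxn m M0) x - S m x - (Sinf x - S m x)) = (fun x => S (maxn m M0) x - Sinf x).
    by apply: funext => x; ring.
  have := HM0 _ (leq_maxr m M0); rewrite sub0r normrN ger0_norm //.
  exact: N_ge0 (X_sub (XS _) XSinf).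
apply: filterS (ae_foralln pc) => x Hx.
have cvs : cvgn (series (fun k => h k x)).
  apply: nondecreasing_is_cvgn.
    move=> m n hmn; rewrite /series /=.
    have := Smon m (n - m)%N x; rewrite (subnKC hmn); exact.
  exists (Sinf x) => _ [m _ <-]; rewrite -subr_ge0; exact: (Hx m).
have hx0 := cvg_series_cvg_0 cvs.
apply/cvgrPdist_lt => eps eps0.
move/cvgrPdist_lt: hx0 => /(_ _ eps0); apply: filterS => k.
by rewrite sub0r normrN normr_id distrC.
Qed.
End Basic.

Theorem lemma2p8 (d : measure_display) (T : measurableType d) (R : realType)
  (mu : {finite_measure set T -> \bar R})
  (X : set (T -> R)) (N : (T -> R) -> R) :
  banach_rect_fun_space mu X N ->
  (subsequence_property mu X N <-> inclusion_L0_continuous mu X N) /\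
  (inclusion_L0_continuous mu X N <-> pos_cone_closed mu X N).
Proof.
move=> B; split; split.
- exact: i_ii.
- by move=> h; apply: iii_i => //; exact: ii_iii.
- exact: ii_iii.
- by move=> h; apply: i_ii => //; exact: iii_i.
Qed.
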